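(* Let $\phi:\mathbb{N}_0\to\mathbb{N}_0$ satisfy $\phi(0)=0$ and $\phi(x)\neq x$ for all $x\in\mathbb{N}$, and let $n\ge2$. If the local function $\phi_n$ has no cycle, then $M_n(\phi)^k\cap M_n(\phi)^l=0$ for all $k\ne l$ with $k,l\ge1$.
   Context: $\mathbb{N}=\{1,2,\dots\}$, $\mathbb{N}_0=\mathbb{N}\cup\{0\}$, $D_n=\{1,\dots,n\}$, $D_{n,0}=D_n\cup\{0\}$. The local function $\phi_n:D_{n,0}\to D_{n,0}$ is $\phi_n(x)=\phi(x)$ if $x\in D_n$ and $\phi(x)\in D_n$, and $\phi_n(x)=0$ otherwise. ''$\phi_n$ has no cycle'' means there are no $m\ge2$ and $x\in D_n$ with $\phi_n^m(x)=x$. For $1\le i\le n$, $\mathbf{e}_i$ is the $i$-th unit vector in $\mathbb{Z}^n$ and $\mathbf{e}_0$ the zero vector. $M_n(\phi)$ is the $n\times n$ matrix whose $j$-th column is $\mathbf{e}_{\phi_n(j)}$. For $n\times n$ matrices $A,B$, $A\cap B$ is the number of index pairs $(i,j)$ with $A_{ij}B_{ij}\neq0$. *)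

(* Defs.v *)
From mathcomp Require Import all_boot all_order all_algebra.
Set Implicit Arguments. Unset Strict Implicit. Unset Printing Implicit Defensive.
Import GRing.Theory.
Local Open Scope ring_scope.

Definition inDn (n x : nat) : bool := (1 <= x <= n)%N.

(* local function phi_n on D_{n,0}; values outside D_n are sent to 0 as well *)
Definition phi_loc (phi : nat -> nat) (n : nat) (x : nat) : nat :=
  if inDn n x && inDn n (phi x) then phi x else 0%N.

Definition no_cycle (phi : nat -> nat) (n : nat) : Prop :=
  ~ exists m x : nat, (2 <= m)%N /\ inDn n x /\ iter m (phi_loc phi n) x = x.

(* M_n(phi): n x n integer matrix whose j-th column (1-based) is e_{phi_n(j)};
   with 0-based ordinals i, j the entry is 1 iff phi_n(j+1) = i+1. *)
Definition Mphi (phi : nat -> nat) (n : nat) : 'M[int]_n :=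
  \matrix_(i < n, j < n) (if phi_loc phi n j.+1 == i.+1 then 1 else 0).

(* k-th power of a square matrix (valid for every size n) *)
Definition mxpow (n : nat) (A : 'M[int]_n) (k : nat) : 'M[int]_n :=
  iter k (mulmx A) 1%:M.

(* A ∩ B = number of index pairs (i,j) with A_ij * B_ij <> 0 *)
Definition mx_cap (n : nat) (A B : 'M[int]_n) : nat :=
  #|[set p : 'I_n * 'I_n | A p.1 p.2 * B p.1 p.2 != 0]|.

(* Main.v *)
Require Import Defs.
From mathcomp Require Import all_boot all_order all_algebra.
Import GRing.Theory.
Local Open Scope ring_scope.

Lemma phi_loc_le phi n x : (phi_loc phi n x <= n)%N.
Proof. rewrite /phi_loc; case: ifP => // /andP[_ /andP[]] //. Qed.

Lemma phi_loc0 phi n : phi_loc phi n 0 = 0%N.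
Proof. by []. Qed.

Lemma mxpow_entry phi n k (i j : 'I_n) :
  mxpow (Mphi phi n) k i j = if iter k (phi_loc phi n) j.+1 == i.+1 then 1 else 0.
Proof.
elim: k i j => [|k IH] i j.
  rewrite /mxpow /= mxE eqSS eq_sym.
  case: (j =P i) => [->|H]; first by rewrite !eqxx.
  by rewrite ifF //; apply/eqP => E; apply: H; apply: val_inj.
rewrite /mxpow /= -/(mxpow _ k) mxE.
under eq_bigr => m _ do rewrite IH mxE.
case E: (iter k (phi_loc phi n) j.+1) => [|m0].
  rewrite big1 // => m _. by rewrite mulr0.
have Hm0 : (m0 < n)%N.
  have : (iter k (phi_loc phi n) j.+1 <= n)%N.
    case: k {IH} E => [|k] E /=; first exact: ltn_ord.
    exact: phi_loc_le.
  by rewrite E.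
rewrite (bigD1 (Ordinal Hm0)) //= eqxx mulr1 big1 ?addr0 //.
move=> m Hm. have -> : (m0.+1 == m.+1) = false.
  apply/negbTE; apply: contra Hm => /eqP[] H. by apply/eqP/val_inj.
by rewrite mulr0.
Qed.
Theorem proposition3p5 (phi : nat -> nat) (n : nat) :
  phi 0%N = 0%N ->
  (forall x : nat, (0 < x)%N -> phi x <> x) ->
  (2 <= n)%N ->
  no_cycle phi n ->
  forall k l : nat, (1 <= k)%N -> (1 <= l)%N -> k <> l ->
    mx_cap (mxpow (Mphi phi n) k) (mxpow (Mphi phi n) l) = 0%N.
Proof.
move=> _ _ _ nc.
have key : forall k l (x y : nat), (k < l)%N -> inDn n x -> (0 < y)%N ->
    iter k (phi_loc phi n) x = y -> iter l (phi_loc phi n) x = y -> False.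
  move=> k l x y kl Hx y0 Ek El.
  have Hd : iter (l - k) (phi_loc phi n) y = y.
    by rewrite -[in RHS]El -Ek -(iterD (l - k) k) subnK // ltnW.
  have Hd2 : (2 <= (l - k) + (l - k))%N.
    have : (0 < l - k)%N by rewrite subn_gt0.
    by case: (l - k)%N => [|d] // _; rewrite addSn addnS.
  have Hy : inDn n y.
    rewrite /inDn y0 /= -Ek.
    move: kl Ek {Hd Hd2}; case: k => [|k] kl Ek /=; first by case/andP: Hx.
    exact: phi_loc_le.
  apply: nc; exists ((l - k) + (l - k))%N, y; split; first exact: Hd2.
  split; first exact: Hy.
  by rewrite iterD !Hd.
move=> k l _ _ kl; apply/eqP; rewrite cards_eq0; apply/eqP/setP => -[i j].
rewrite !inE /= !mxpow_entry.
case: (iter k (phi_loc phi n) j.+1 =P i.+1) => Ek; last by rewrite /= ?mulr0 ?mul0r ?eqxx.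
case: (iter l (phi_loc phi n) j.+1 =P i.+1) => El; last by rewrite /= ?mulr0 ?mul0r ?eqxx.
exfalso.
have Hx : inDn n j.+1 by rewrite /inDn /= ltn_ord.
case: (ltngtP k l) => H.
- exact: (key k l j.+1 i.+1 H Hx isT Ek El).
- exact: (key l k j.+1 i.+1 H Hx isT El Ek).
- exact: kl H.
Qed.
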